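(* Let $\alpha\in[0,1)$ and let $$X(\sqrt{t},\alpha)=\{\sqrt{n}\,e^{2\pi i n\alpha}\ :\ n\in\mathbb{N}\}\subset\mathbb{C}.$$ (a) If $\alpha$ is badly approximable and its partial quotients are all bounded by the positive integer $B$, then $X(\sqrt{t},\alpha)$ is $6\sqrt{B}$-relatively dense. (b) If $X(\sqrt{t},\alpha)$ is $r$-relatively dense, then $\alpha$ is badly approximable and all its partial quotients are bounded by $B=\lfloor 96r^2\rfloor$. (c) If $\alpha$ is badly approximable with constant $C$, then $X(\sqrt{t},\alpha)$ is $\sqrt{C}/2$-uniformly discrete. (d) If $X(\sqrt{t},\alpha)$ is $s$-uniformly discrete, then $\alpha$ is badly approximable with constant $C=s^2/53$.
   Context: $\mathbb{C}$ is identified with $\mathbb{R}^2$, and $B(x,r)$ denotes the open disk of radius $r$ centered at $x$. A set $X\subset\mathbb{C}$ is $r$-relatively dense ($r>0$) if $B(x,r)\cap X\ne\emptyset$ for every $x\in\mathbb{C}$. It is $s$-uniformly discrete ($s>0$) if $\mathrm{Card}(B(x,s)\cap X)\le1$ for every $x\in\mathbb{C}$. A real number $\alpha$ is badly approximable with constant $C>0$ if $q|q\alpha-p|\ge C$ for all $(p,q)\in\mathbb{Z}\times\mathbb{N}$. Equivalently, the partial quotients $a_1,a_2,\dots$ of its continued fraction expansion $\alpha=[0;a_1,a_2,\dots]$ are bounded by some positive integer $B$. *)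

(* Defs.v *)
(* C is identified with R^2, points are pairs (R * R). *)
From Stdlib Require Import Reals Lra Lia ZArith.
Open Scope R_scope.

Definition dist2 (z w : R * R) : R :=
  sqrt ((fst z - fst w) ^ 2 + (snd z - snd w) ^ 2).

Definition in_ball (x : R * R) (r : R) (z : R * R) : Prop := dist2 x z < r.

Definition Xpt (alpha : R) (n : nat) : R * R :=
  (sqrt (INR n) * cos (2 * PI * INR n * alpha),
   sqrt (INR n) * sin (2 * PI * INR n * alpha)).

Definition inX (alpha : R) (z : R * R) : Prop :=
  exists n : nat, (1 <= n)%nat /\ z = Xpt alpha n.

Definition rel_dense (X : R * R -> Prop) (r : R) : Prop :=
  0 < r /\ forall x : R * R, exists z, in_ball x r z /\ X z.

Definition unif_discrete (X : R * R -> Prop) (s : R) : Prop :=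
  0 < s /\ forall x z w : R * R,
    in_ball x s z -> X z -> in_ball x s w -> X w -> z = w.

Definition bad_approx_const (alpha C : R) : Prop :=
  0 < C /\ forall (p : Z) (q : nat), (1 <= q)%nat ->
    INR q * Rabs (INR q * alpha - IZR p) >= C.

Definition bad_approx (alpha : R) : Prop := exists C, bad_approx_const alpha C.

(* Continued fraction via the Gauss map: x_0 = alpha,
   x_k = 1/x_{k-1} - floor(1/x_{k-1}) (expansion stops when x_{k-1} = 0),
   partial quotient a_{k+1} = floor(1/x_k) when x_k <> 0. *)
Definition gauss (x : R) : R :=
  if Req_EM_T x 0 then 0 else / x - IZR (Int_part (/ x)).

Definition cf_rem (alpha : R) (k : nat) : R := Nat.iter k gauss alpha.

(* a_{k+1}, meaningful when cf_rem alpha k <> 0 *)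
Definition partial_quotient (alpha : R) (k : nat) : Z :=
  Int_part (/ cf_rem alpha k).

Definition pq_bounded (alpha : R) (B : Z) : Prop :=
  forall k : nat, cf_rem alpha k <> 0 -> (partial_quotient alpha k <= B)%Z.

(* Main.v *)
Require Import Defs.
From Stdlib Require Import Reals Lra Lia ZArith Psatz.
Open Scope R_scope.

Lemma sin_sq_le u : sin u ^ 2 <= u ^ 2.
Proof.
  assert (Hp : forall v, 0 < v -> sin v ^ 2 <= v ^ 2).
  { intros v Hv. destruct (Rle_lt_dec v PI) as [H|H].
    - pose proof (sin_ge_0 v ltac:(lra) H). pose proof (sin_lt_x v Hv). nra.
    - pose proof (SIN_bound v). pose proof PI2_3_2. nra. }
  destruct (Rtotal_order u 0) as [H|[H|H]].
  - replace (sin u ^ 2) with (sin (-u) ^ 2) by (rewrite sin_neg; ring).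
    replace (u ^ 2) with ((-u)^2) by ring. apply Hp; lra.
  - subst. rewrite sin_0. lra.
  - auto.
Qed.

Lemma one_minus_cos_le x : 1 - cos x <= x ^ 2 / 2.
Proof.
  replace x with (2 * (x/2)) at 1 by field.
  rewrite cos_2a_sin. pose proof (sin_sq_le (x/2)). nra.
Qed.

Lemma cos_int_shift x (t : Z) : cos (x + 2 * PI * IZR t) = cos x.
Proof.
  destruct (Z_le_gt_dec 0 t) as [H|H].
  - rewrite <- (Z2Nat.id t H). rewrite <- INR_IZR_INZ.
    replace (x + 2 * PI * INR (Z.to_nat t)) with (x + 2 * INR (Z.to_nat t) * PI) by ring.
    apply cos_period.
  - set (k := Z.to_nat (- t)).
    assert (Hk : IZR t = - INR k).
    { unfold k. rewrite INR_IZR_INZ, Z2Nat.id by lia. rewrite opp_IZR. ring_simplify. reflexivity. }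
    rewrite Hk. rewrite <- (cos_period (x + 2 * PI * - INR k) k). f_equal. ring.
Qed.

Lemma sin_lb_ge t : 0 <= t <= 2 -> t / 3 <= sin_lb t.
Proof.
  intros Ht. unfold sin_lb, sin_approx, sin_term. simpl sum_f_R0.
  replace (INR (fact (2*0+1))) with 1 by (simpl; lra).
  replace (INR (fact (2*1+1))) with 6 by (simpl; lra).
  replace (INR (fact (2*2+1))) with 120 by (simpl; lra).
  replace (INR (fact (2*3+1))) with 5040 by (simpl; lra).
  simpl. 
  assert (0 <= t^2) by nra. assert (t^2 <= 4) by nra.
  assert (0 <= t^5) by (apply pow_le; lra).
  nra.
Qed.

Lemma sin_ge_third t : 0 <= t <= PI / 2 -> t / 3 <= sin t.
Proof.
  intros Ht. pose proof PI_4 as P4. pose proof PI2_3_2 as P3.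
  pose proof (SIN t ltac:(lra) ltac:(lra)) as [H _].
  pose proof (sin_lb_ge t ltac:(lra)). lra.
Qed.

Lemma one_minus_cos_ge w d : 0 <= d -> (forall l : Z, d <= Rabs (w - IZR l)) ->
  2 * d ^ 2 <= 1 - cos (2 * PI * w).
Proof.
  intros Hd Hl.
  set (l := Int_part (w + /2)).
  pose proof (base_Int_part (w + /2)) as [B1 B2]. fold l in B1, B2.
  set (y := w - IZR l).
  assert (Hy : - / 2 <= y < /2) by (unfold y; lra).
  specialize (Hl l). fold y in Hl.
  replace (2 * PI * w) with (2 * (PI * y) + 2 * PI * IZR l) by (unfold y; ring).
  rewrite cos_int_shift, cos_2a_sin.
  assert (Hs : sin (PI * y) * sin (PI * y) = sin (PI * Rabs y) * sin (PI * Rabs y)).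
  { unfold Rabs; destruct (Rcase_abs y).
    - replace (PI * - y) with (- (PI * y)) by ring. rewrite sin_neg. ring.
    - reflexivity. }
  replace (1 - (1 - 2 * sin (PI * y) * sin (PI * y))) with (2 * (sin (PI * y) * sin (PI * y))) by ring. rewrite Hs.
  pose proof PI2_3_2. pose proof PI_4.
  assert (Ha : 0 <= Rabs y <= /2) by (unfold Rabs; destruct (Rcase_abs y); lra).
  pose proof (sin_ge_third (PI * Rabs y) ltac:(nra)).
  assert (d * 3 <= PI * Rabs y) by nra.
  nra.
Qed.

Lemma dist_polar a b u v :
  dist2 (a * cos u, a * sin u) (b * cos v, b * sin v) = sqrt (a ^ 2 + b ^ 2 - 2 * a * b * cos (u - v)).
Proof.
  unfold dist2; simpl fst; simpl snd. f_equal. rewrite cos_minus.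
  pose proof (sin2_cos2 u). pose proof (sin2_cos2 v). unfold Rsqr in *. nra.
Qed.

Lemma dist2_sym z w : dist2 z w = dist2 w z.
Proof. unfold dist2. f_equal. ring. Qed.

Lemma dist2_ge0 z w : 0 <= dist2 z w.
Proof. unfold dist2. apply sqrt_pos. Qed.

Lemma dist2_sq z w : dist2 z w ^ 2 = (fst z - fst w) ^ 2 + (snd z - snd w) ^ 2.
Proof. unfold dist2. rewrite pow2_sqrt; [ring | pose proof (pow2_ge_0 (fst z - fst w)); pose proof (pow2_ge_0 (snd z - snd w)); lra]. Qed.

Lemma dist2_triangle x z w : dist2 z w <= dist2 x z + dist2 x w.
Proof.
  pose proof (dist2_sq z w) as Ec. pose proof (dist2_sq x z) as Ea. pose proof (dist2_sq x w) as Eb.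
  pose proof (dist2_ge0 z w). pose proof (dist2_ge0 x z). pose proof (dist2_ge0 x w).
  set (A := dist2 x z) in *. set (Bb := dist2 x w) in *.
  set (Cc := dist2 z w) in *.
  destruct x as [x1 x2], z as [z1 z2], w as [w1 w2]. cbn [fst snd] in Ea, Eb, Ec.
  assert (HCS : (x1 - z1) * (x1 - w1) + (x2 - z2) * (x2 - w2) >= - (A * Bb)).
  { assert (((x1 - z1) * (x1 - w1) + (x2 - z2) * (x2 - w2)) ^ 2 <= (A * Bb) ^ 2).
    { replace ((A * Bb) ^ 2) with (A ^ 2 * Bb ^ 2) by ring. rewrite Ea, Eb.
      pose proof (pow2_ge_0 ((x1 - z1) * (x2 - w2) - (x2 - z2) * (x1 - w1))). nra. }
    assert (0 <= A * Bb) by (apply Rmult_le_pos; assumption).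
    set (X := (x1 - z1) * (x1 - w1) + (x2 - z2) * (x2 - w2)) in *.
    destruct (Rge_dec X (- (A * Bb))) as [|Hn]; [assumption|].
    exfalso. assert (Hlt : X < - (A * Bb)) by lra. nra. }
  assert (Cc ^ 2 <= (A + Bb) ^ 2) by nra.
  nra.
Qed.

Lemma dist2_mid z w :
  dist2 ((fst z + fst w) / 2, (snd z + snd w) / 2) z = dist2 z w / 2.
Proof.
  unfold dist2; cbn [fst snd]. 
  replace (((fst z + fst w) / 2 - fst z) ^ 2 + ((snd z + snd w) / 2 - snd z) ^ 2)
    with (((fst z - fst w) ^ 2 + (snd z - snd w) ^ 2) / 2 ^ 2) by field.
  rewrite sqrt_div_alt by lra. rewrite sqrt_pow2 by lra. reflexivity.
Qed.

Lemma dist2_mid' z w :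
  dist2 ((fst z + fst w) / 2, (snd z + snd w) / 2) w = dist2 z w / 2.
Proof.
  replace ((fst z + fst w) / 2, (snd z + snd w) / 2) with ((fst w + fst z) / 2, (snd w + snd z) / 2)
    by (f_equal; field). rewrite dist2_mid. rewrite dist2_sym. reflexivity.
Qed.

Lemma Xpt_norm alpha n : fst (Xpt alpha n) ^ 2 + snd (Xpt alpha n) ^ 2 = INR n.
Proof.
  unfold Xpt; cbn [fst snd]. pose proof (sin2_cos2 (2 * PI * INR n * alpha)) as H. unfold Rsqr in *.
  pose proof (pow2_sqrt (INR n) (pos_INR n)) as E.
  replace ((sqrt (INR n) * cos (2 * PI * INR n * alpha)) ^ 2 +
   (sqrt (INR n) * sin (2 * PI * INR n * alpha)) ^ 2) with
   (sqrt (INR n) ^ 2 * (sin (2 * PI * INR n * alpha) * sin (2 * PI * INR n * alpha) +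
      cos (2 * PI * INR n * alpha) * cos (2 * PI * INR n * alpha))) by ring.
  rewrite H, E. ring.
Qed.

Lemma Xpt_inj alpha n m : Xpt alpha n = Xpt alpha m -> n = m.
Proof.
  intros H. apply INR_eq. rewrite <- Xpt_norm with (alpha := alpha), <- Xpt_norm with (alpha := alpha) (n := m).
  rewrite H. reflexivity.
Qed.

Lemma dist_Xpt alpha n m :
  dist2 (Xpt alpha n) (Xpt alpha m) =
  sqrt (INR n + INR m - 2 * sqrt (INR n) * sqrt (INR m) * cos (2 * PI * (INR n - INR m) * alpha)).
Proof.
  unfold Xpt. rewrite dist_polar. f_equal.
  rewrite !pow2_sqrt by apply pos_INR. f_equal. f_equal. f_equal. ring.
Qed.

Section CF.
Variable alpha : R.
Hypothesis Ha : 0 <= alpha < 1.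

Definition xx i := cf_rem alpha i.
Definition aa i := partial_quotient alpha i.

Lemma xx_S i : xx (S i) = gauss (xx i).
Proof. reflexivity. Qed.

Lemma xx01 i : 0 <= xx i < 1.
Proof.
  induction i as [|i IH].
  - exact Ha.
  - rewrite xx_S. unfold gauss. destruct (Req_EM_T (xx i) 0); [lra|].
    pose proof (base_Int_part (/ xx i)). lra.
Qed.

Lemma xx_next i : xx i <> 0 -> xx (S i) = / xx i - IZR (aa i).
Proof.
  intros H. rewrite xx_S. unfold gauss. destruct (Req_EM_T (xx i) 0); [contradiction|reflexivity].
Qed.

Lemma aa_ge1 i : xx i <> 0 -> (1 <= aa i)%Z.
Proof.
  intros H. pose proof (xx01 i). unfold aa, partial_quotient. fold (xx i).
  assert (1 < / xx i).
  { rewrite <- Rinv_1. apply Rinv_lt_contravar; lra. }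
  pose proof (base_Int_part (/ xx i)) as [_ B2].
  assert (Hp : 0 < IZR (Int_part (/ xx i))) by lra. apply lt_IZR in Hp. lia.
Qed.

Lemma aa_ge0 i : (0 <= aa i)%Z.
Proof.
  destruct (Req_EM_T (xx i) 0) as [E|E].
  - unfold aa, partial_quotient. fold (xx i). rewrite E, Rinv_0.
    rewrite <- (Int_part_spec 0 0) by (simpl; lra). lia.
  - pose proof (aa_ge1 i E). lia.
Qed.

Fixpoint qp (j : nat) : (Z * Z) * (Z * Z) :=
  match j with
  | O => ((0%Z, 1%Z), (1%Z, 0%Z))
  | S k => let '((q0, q1), (p0, p1)) := qp k in
           ((q1, (aa k * q1 + q0)%Z), (p1, (aa k * p1 + p0)%Z))
  end.

Definition QQ j := fst (fst (qp j)).
Definition PP j := fst (snd (qp j)).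

Lemma QQ_0 : QQ 0 = 0%Z. Proof. reflexivity. Qed.
Lemma QQ_1 : QQ 1 = 1%Z. Proof. reflexivity. Qed.
Lemma PP_0 : PP 0 = 1%Z. Proof. reflexivity. Qed.
Lemma PP_1 : PP 1 = 0%Z. Proof. reflexivity. Qed.

Lemma QQ_SS j : QQ (S (S j)) = (aa j * QQ (S j) + QQ j)%Z.
Proof.
  unfold QQ. simpl. destruct (qp j) as [[q0 q1] [p0 p1]]. simpl. reflexivity.
Qed.

Lemma PP_SS j : PP (S (S j)) = (aa j * PP (S j) + PP j)%Z.
Proof.
  unfold PP. simpl. destruct (qp j) as [[q0 q1] [p0 p1]]. simpl. reflexivity.
Qed.

Fixpoint Bt (j : nat) : R :=
  match j with O => 1 | S k => Bt k * xx k end.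

Definition EE j := IZR (QQ j) * alpha - IZR (PP j).

Lemma Bt_ge0 j : 0 <= Bt j.
Proof. induction j; simpl; [lra|]. pose proof (xx01 j). nra. Qed.

Lemma Bt_SS j : xx j <> 0 -> Bt (S (S j)) = Bt j - IZR (aa j) * Bt (S j).
Proof.
  intros H. cbn [Bt]. rewrite (xx_next j H). field. exact H.
Qed.

Lemma EE_SS j : EE (S (S j)) = IZR (aa j) * EE (S j) + EE j.
Proof. unfold EE. rewrite QQ_SS, PP_SS, !plus_IZR, !mult_IZR. ring. Qed.

Definition nzp j := forall i, (i < j)%nat -> xx i <> 0.

Lemma EE_Bt j : nzp j -> EE j = (-1) ^ (S j) * Bt j /\ EE (S j) = (-1) ^ (S (S j)) * Bt (S j).
Proof.
  induction j as [|j IH]; intros Hn.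
  - unfold EE. rewrite QQ_0, QQ_1, PP_0, PP_1. simpl. unfold xx, cf_rem. simpl. split; ring.
  - destruct IH as [H1 H2]. { intros i Hi. apply Hn. lia. }
    split; [exact H2|].
    rewrite EE_SS, H1, H2, Bt_SS by (apply Hn; lia).
    simpl. ring.
Qed.

Lemma W_eq j : nzp j -> IZR (QQ (S j)) * Bt j + IZR (QQ j) * Bt (S j) = 1.
Proof.
  induction j as [|j IH]; intros Hn.
  - rewrite QQ_0, QQ_1. simpl. ring.
  - rewrite QQ_SS, Bt_SS by (apply Hn; lia). rewrite plus_IZR, mult_IZR.
    rewrite <- IH by (intros i Hi; apply Hn; lia). ring.
Qed.

Lemma DD_eq j : ((QQ j * PP (S j) - PP j * QQ (S j)) * (QQ j * PP (S j) - PP j * QQ (S j)) = 1)%Z.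
Proof.
  assert (forall j, (QQ j * PP (S j) - PP j * QQ (S j) = if Nat.even j then -1 else 1)%Z).
  { induction j0 as [|j0 IH].
    - reflexivity.
    - rewrite QQ_SS, PP_SS. rewrite Nat.even_succ, <- Nat.negb_even.
      destruct (Nat.even j0); simpl in *; lia. }
  rewrite H. destruct (Nat.even j); reflexivity.
Qed.

Lemma QQ_ge0 j : (0 <= QQ j)%Z /\ (0 <= QQ (S j))%Z.
Proof.
  induction j as [|j IH].
  - rewrite QQ_0, QQ_1. lia.
  - split; [apply IH|]. rewrite QQ_SS. pose proof (aa_ge0 j). nia.
Qed.

Lemma QQ_mono j : nzp j -> (1 <= QQ (S j))%Z /\ (QQ j <= QQ (S j))%Z.
Proof.
  induction j as [|j IH]; intros Hn.
  - rewrite QQ_0, QQ_1. lia.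
  - destruct IH as [H1 H2]. { intros i Hi. apply Hn. lia. }
    rewrite QQ_SS. pose proof (aa_ge1 j (Hn j ltac:(lia))). pose proof (QQ_ge0 j). nia.
Qed.

Lemma QQ_grow j : (forall i, xx i <> 0) -> (Z.of_nat j + 1 <= QQ (S (S j)))%Z.
Proof.
  intros Hn. induction j as [|j IH].
  - rewrite QQ_SS, QQ_1, QQ_0. pose proof (aa_ge1 0 (Hn 0%nat)). lia.
  - rewrite QQ_SS. pose proof (aa_ge1 (S j) (Hn (S j))).
    pose proof (QQ_mono j (fun i _ => Hn i)) as [H1 _].
    pose proof (QQ_ge0 (S (S j))) as [_ H2]. nia.
Qed.

End CF.

Lemma INR_toZ z : (0 <= z)%Z -> INR (Z.to_nat z) = IZR z.
Proof. intros H. rewrite INR_IZR_INZ, Z2Nat.id by exact H. reflexivity. Qed.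

Lemma half_int (M : Z) : / 2 <= Rabs (IZR M - / 2).
Proof.
  destruct (Z_le_gt_dec M 0) as [H|H].
  - apply IZR_le in H. rewrite Rabs_left by lra. lra.
  - assert (1 <= IZR M) by (apply IZR_le; lia). rewrite Rabs_right by lra. lra.
Qed.

Lemma sqrt_ge_of_sq a r : 0 <= r -> r ^ 2 <= a -> r <= sqrt a.
Proof.
  intros H1 H2. rewrite <- (sqrt_pow2 r H1). apply sqrt_le_1_alt. exact H2.
Qed.

Lemma hole alpha r (q : nat) (p : Z) : 0 < r -> (1 <= q)%nat ->
  INR q * Rabs (INR q * alpha - IZR p) < / (96 * r ^ 2) ->
  exists c, forall n, ~ in_ball c r (Xpt alpha n).
Proof.
  intros Hr Hq Hsmall.
  set (Q := INR q). assert (HQ : 1 <= Q) by (unfold Q; apply (le_INR 1); exact Hq).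
  set (th := Q * alpha - IZR p).
  set (rho := 2 * Q * r).
  set (ga := (/ 2 + rho ^ 2 * th) / Q).
  exists (rho * cos (2 * PI * ga), rho * sin (2 * PI * ga)).
  intros n Hin. unfold in_ball, Xpt in Hin. rewrite dist_polar in Hin.
  revert Hin. apply Rle_not_lt. apply sqrt_ge_of_sq; [lra|].
  set (s := sqrt (INR n)).
  assert (Hs0 : 0 <= s) by apply sqrt_pos.
  assert (Hs2 : s ^ 2 = INR n) by (apply pow2_sqrt, pos_INR).
  set (w := INR n * alpha - ga).
  replace (cos (2 * PI * ga - 2 * PI * INR n * alpha)) with (cos (2 * PI * w))
    by (rewrite <- cos_neg; f_equal; unfold w; ring).
  assert (Hc1 : 0 <= 1 - cos (2 * PI * w)) by (pose proof (COS_bound (2 * PI * w)); lra).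
  assert (Hrho : 2 * r <= rho) by (unfold rho; nra).
  replace (rho ^ 2 + s ^ 2 - 2 * rho * s * cos (2 * PI * w))
    with ((s - rho) ^ 2 + 2 * s * rho * (1 - cos (2 * PI * w))) by ring.
  destruct (Rle_dec r (Rabs (s - rho))) as [Hfar|Hnear].
  - assert (r ^ 2 <= (s - rho) ^ 2).
    { rewrite <- (pow2_abs (s - rho)). apply pow_incr. lra. }
    assert (0 <= 2 * s * rho * (1 - cos (2 * PI * w))).
    { apply Rmult_le_pos; [|lra]. nra. }
    lra.
  - apply Rnot_le_lt in Hnear.
    assert (Hsr : rho - r < s < rho + r) by (apply Rabs_def2 in Hnear; lra).
    assert (Hth : Rabs th * (96 * r ^ 2 * Q) < 1).
    { assert (0 < 96 * r ^ 2) by nra.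
      apply (Rmult_lt_compat_r (96 * r ^ 2)) in Hsmall; [|lra].
      rewrite Rinv_l in Hsmall by lra. fold Q th in Hsmall. nra. }
    assert (Hn : Rabs (INR n - rho ^ 2) <= 6 * Q * r ^ 2).
    { rewrite <- Hs2. replace (s ^ 2 - rho ^ 2) with ((s - rho) * (s + rho)) by ring.
      rewrite Rabs_mult. rewrite (Rabs_right (s + rho)) by lra.
      assert (Rabs (s - rho) * (s + rho) <= r * (3 * rho)).
      { apply Rmult_le_compat; try lra. apply Rabs_pos. }
      unfold rho in *. nra. }
    assert (Hprod : Rabs ((INR n - rho ^ 2) * th) <= / 16).
    { rewrite Rabs_mult. pose proof (Rabs_pos th). pose proof (Rabs_pos (INR n - rho ^ 2)).
      assert (Rabs (INR n - rho ^ 2) * Rabs th <= 6 * Q * r ^ 2 * Rabs th)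
        by (apply Rmult_le_compat_r; lra).
      nra. }
    assert (Hd : forall l : Z, 7 / (16 * Q) <= Rabs (w - IZR l)).
    { intros l.
      set (M := (Z.of_nat n * p - l * Z.of_nat q)%Z).
      assert (HM : IZR M = INR n * IZR p - IZR l * Q).
      { unfold M, Q. rewrite minus_IZR, !mult_IZR, <- !INR_IZR_INZ. ring. }
      assert (Hw : w - IZR l = ((IZR M - / 2) + (INR n - rho ^ 2) * th) / Q).
      { unfold w, ga. rewrite HM. unfold th. field. lra. }
      rewrite Hw. unfold Rdiv. rewrite Rabs_mult. rewrite (Rabs_right (/ Q)) by (apply Rle_ge, Rlt_le, Rinv_0_lt_compat; lra).
      pose proof (half_int M).
      pose proof (Rabs_triang_inv (IZR M - / 2) (- ((INR n - rho ^ 2) * th))).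
      replace (IZR M - / 2 - - ((INR n - rho ^ 2) * th)) with (IZR M - / 2 + (INR n - rho ^ 2) * th) in H0 by ring.
      rewrite Rabs_Ropp in H0.
      replace (7 * / (16 * Q)) with (7 / 16 * / Q) by (field; lra).
      apply Rmult_le_compat_r; [apply Rlt_le, Rinv_0_lt_compat; lra|]. lra. }
    pose proof (one_minus_cos_ge w (7 / (16 * Q)) ltac:(apply Rlt_le; apply Rdiv_lt_0_compat; lra) Hd) as Hcos.
    assert (Hsq : 2 * s * rho * (1 - cos (2 * PI * w)) >= 2 * (Q * r) * (2 * Q * r) * (2 * (7 / (16 * Q)) ^ 2)).
    { apply Rle_ge. apply Rmult_le_compat.
      - assert (0 <= Q * r) by nra. nra.
      - nra.
      - unfold rho in *. assert (Q * r <= s) by nra. assert (0 <= Q * r) by nra. nra.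
      - exact Hcos. }
    assert (E : 2 * (Q * r) * (2 * Q * r) * (2 * (7 / (16 * Q)) ^ 2) = 392 / 256 * r ^ 2) by (field; lra).
    rewrite E in Hsq. pose proof (pow2_ge_0 (s - rho)). nra.
Qed.

Lemma Rabs_pm1_pow k x : Rabs ((-1) ^ k * x) = Rabs x.
Proof. rewrite Rabs_mult, pow_1_abs. ring. Qed.

Lemma bad_nz alpha (Ha : 0 <= alpha < 1) : bad_approx alpha -> forall i, xx alpha i <> 0.
Proof.
  intros [C [HC Hb]].
  assert (Hall : forall j, nzp alpha j).
  { induction j as [|j IH].
    - intros i Hi. lia.
    - intros i Hi. destruct (Nat.eq_dec i j) as [->|Hne]; [|apply IH; lia].
      intros Hx.
      destruct (EE_Bt alpha j IH) as [_ HE].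
      assert (HB : Bt alpha (S j) = 0) by (cbn [Bt]; rewrite Hx; ring).
      rewrite HB, Rmult_0_r in HE.
      destruct (QQ_mono alpha Ha j IH) as [HQ _].
      specialize (Hb (PP alpha (S j)) (Z.to_nat (QQ alpha (S j))) ltac:(lia)).
      rewrite INR_toZ in Hb by lia. unfold EE in HE. rewrite HE, Rabs_R0, Rmult_0_r in Hb. lra. }
  intros i. apply (Hall (S i)). lia.
Qed.

Lemma partb alpha (Ha : 0 <= alpha < 1) r : rel_dense (inX alpha) r ->
  bad_approx alpha /\ pq_bounded alpha (Int_part (96 * r ^ 2)).
Proof.
  intros [Hr Hd].
  assert (Hba : forall (p : Z) (q : nat), (1 <= q)%nat ->
            INR q * Rabs (INR q * alpha - IZR p) >= / (96 * r ^ 2)).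
  { intros p q Hq. apply Rnot_lt_ge. intros Hlt.
    destruct (hole alpha r q p Hr Hq Hlt) as [c Hc].
    destruct (Hd c) as [z [Hz [n [_ ->]]]]. exact (Hc n Hz). }
  assert (Hbad : bad_approx alpha).
  { exists (/ (96 * r ^ 2)). split; [apply Rinv_0_lt_compat; nra | exact Hba]. }
  split; [exact Hbad|].
  intros k _. pose proof (bad_nz alpha Ha Hbad) as Hnz.
  apply Z.nlt_ge. intros Hlt. fold (aa alpha k) in Hlt.
  pose proof (base_Int_part (96 * r ^ 2)) as [_ B2].
  assert (Ha1 : IZR (Int_part (96 * r ^ 2)) + 1 <= IZR (aa alpha k)).
  { rewrite <- plus_IZR. apply IZR_le. lia. }
  destruct (QQ_mono alpha Ha k (fun i _ => Hnz i)) as [HQ _].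
  specialize (Hba (PP alpha (S k)) (Z.to_nat (QQ alpha (S k))) ltac:(lia)).
  rewrite INR_toZ in Hba by lia.
  destruct (EE_Bt alpha k (fun i _ => Hnz i)) as [_ HE]. unfold EE in HE. rewrite HE, Rabs_pm1_pow in Hba.
  rewrite Rabs_right in Hba by (apply Rle_ge, Bt_ge0; exact Ha).
  pose proof (W_eq alpha (S k) (fun i _ => Hnz i)) as HW.
  rewrite QQ_SS, plus_IZR, mult_IZR in HW.
  pose proof (QQ_ge0 alpha Ha k) as [H0 H1]. apply IZR_le in H0. apply IZR_le in H1.
  pose proof (Bt_ge0 alpha Ha (S k)). pose proof (Bt_ge0 alpha Ha (S (S k))).
  set (X := IZR (QQ alpha (S k)) * Bt alpha (S k)) in *.
  assert (HX : IZR (aa alpha k) * X <= 1).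
  { unfold X. assert (0 <= IZR (QQ alpha k) * Bt alpha (S k)) by nra.
    assert (0 <= IZR (QQ alpha (S k)) * Bt alpha (S (S k))) by nra.
    replace (IZR (aa alpha k) * (IZR (QQ alpha (S k)) * Bt alpha (S k))) with
      (1 - IZR (QQ alpha k) * Bt alpha (S k) - IZR (QQ alpha (S k)) * Bt alpha (S (S k))) by (rewrite <- HW; ring).
    lra. }
  assert (Hpos : 0 < 96 * r ^ 2) by nra.
  assert (HX2 : 1 <= X * (96 * r ^ 2)).
  { apply Rge_le in Hba. apply (Rmult_le_compat_r (96 * r ^ 2)) in Hba; [|lra].
    rewrite Rinv_l in Hba by lra. exact Hba. }
  nra.
Qed.

Lemma sep alpha C : bad_approx_const alpha C -> C < 1 -> forall n m, (1 <= m)%nat -> (m < n)%nat ->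
  sqrt C <= dist2 (Xpt alpha n) (Xpt alpha m).
Proof.
  intros [HC Hb] HC1 n m Hm Hmn.
  rewrite dist_Xpt. apply sqrt_le_1_alt.
  set (k := (n - m)%nat).
  assert (Hk : INR n - INR m = INR k) by (unfold k; rewrite minus_INR by lia; ring).
  assert (Hk1 : 1 <= INR k) by (apply (le_INR 1); unfold k; lia).
  rewrite Hk.
  set (x := sqrt (INR m)). set (y := sqrt (INR n)).
  assert (Hx2 : x ^ 2 = INR m) by (apply pow2_sqrt, pos_INR).
  assert (Hy2 : y ^ 2 = INR n) by (apply pow2_sqrt, pos_INR).
  assert (Hx0 : 0 <= x) by apply sqrt_pos. assert (Hy0 : 0 <= y) by apply sqrt_pos.
  assert (Hx1 : 1 <= x).
  { unfold x. rewrite <- sqrt_1. apply sqrt_le_1_alt. apply (le_INR 1). exact Hm. }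
  assert (Hxy : x < y).
  { unfold x, y. apply sqrt_lt_1_alt. split; [apply pos_INR|]. apply lt_INR. exact Hmn. }
  assert (Hkxy : INR k = (y - x) * (y + x)) by (rewrite <- Hk, <- Hx2, <- Hy2; ring).
  assert (Hd : forall l : Z, C / INR k <= Rabs (INR k * alpha - IZR l)).
  { intros l. specialize (Hb l k ltac:(unfold k; lia)). apply Rge_le in Hb.
    unfold Rdiv. apply (Rmult_le_reg_l (INR k)); [lra|].
    rewrite <- Rmult_assoc, Rinv_r_simpl_m by lra. exact Hb. }
  pose proof (one_minus_cos_ge (INR k * alpha) (C / INR k)
     ltac:(apply Rlt_le, Rdiv_lt_0_compat; lra) Hd) as Hcos.
  replace (2 * PI * INR k * alpha) with (2 * PI * (INR k * alpha)) by ring.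
  set (c := cos (2 * PI * (INR k * alpha))) in *.
  rewrite <- Hx2, <- Hy2.
  replace (y ^ 2 + x ^ 2 - 2 * y * x * c) with ((y - x) ^ 2 + 2 * x * y * (1 - c)) by ring.
  set (d := y - x) in *.
  assert (Hcos0 : 0 <= 1 - c) by (pose proof (COS_bound (2 * PI * (INR k * alpha))); unfold c; lra).
  destruct (Rle_dec 1 d) as [H1|H1].
  - assert (0 <= 2 * x * y * (1 - c)) by (apply Rmult_le_pos; nra). nra.
  - assert (HS : (y + x) ^ 2 <= 9 * (x * y)) by nra.
    assert (Hterm : 2 * x * y * (2 * (C / INR k) ^ 2) <= 2 * x * y * (1 - c))
      by (apply Rmult_le_compat_l; nra).
    replace (2 * x * y * (2 * (C / INR k) ^ 2)) with (4 * x * y * C ^ 2 / (d ^ 2 * (y + x) ^ 2)) in Hterm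
      by (rewrite Hkxy; field; split; nra).
    assert (Hd0 : 0 < d) by (unfold d; lra).
    assert (Hpos : 0 < d ^ 2 * (y + x) ^ 2) by (apply Rmult_lt_0_compat; nra).
    assert (Key : C * (d ^ 2 * (y + x) ^ 2) <= d ^ 2 * (d ^ 2 * (y + x) ^ 2) + 4 * x * y * C ^ 2).
    { assert (4 * x * y * C ^ 2 >= (y + x) ^ 2 / 4 * C ^ 2) by nra.
      pose proof (pow2_ge_0 (d ^ 2 - C / 2)). nra. }
    assert (C <= d ^ 2 + 4 * x * y * C ^ 2 / (d ^ 2 * (y + x) ^ 2)).
    { apply (Rmult_le_reg_r (d ^ 2 * (y + x) ^ 2)); [exact Hpos|].
      rewrite Rmult_plus_distr_r. unfold Rdiv. rewrite Rmult_assoc, Rinv_l by lra. lra. }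
    lra.
Qed.

Lemma partc alpha (Ha : 0 <= alpha < 1) C : bad_approx_const alpha C -> unif_discrete (inX alpha) (sqrt C / 2).
Proof.
  intros Hbc. pose proof Hbc as [HC Hb].
  assert (HC1 : C < 1).
  { specialize (Hb 0%Z 1%nat (le_n 1)). simpl INR in Hb. rewrite Rabs_right in Hb; lra. }
  split.
  { assert (0 < sqrt C) by (apply sqrt_lt_R0; lra). lra. }
  intros x z w Hz [n [Hn ->]] Hw [m [Hm ->]].
  unfold in_ball in *.
  pose proof (dist2_triangle x (Xpt alpha n) (Xpt alpha m)) as Ht.
  destruct (lt_eq_lt_dec n m) as [[Hlt|Heq]|Hgt].
  - pose proof (sep alpha C Hbc HC1 m n Hn Hlt). rewrite dist2_sym in H. lra.
  - subst. reflexivity.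
  - pose proof (sep alpha C Hbc HC1 n m Hm Hgt). lra.
Qed.

Lemma mid_close X s z w : unif_discrete X s -> X z -> X w -> dist2 z w < 2 * s -> z = w.
Proof.
  intros [Hs H] Hz Hw Hd.
  apply (H ((fst z + fst w) / 2, (snd z + snd w) / 2)); auto; unfold in_ball.
  - rewrite dist2_mid. lra.
  - rewrite dist2_mid'. lra.
Qed.

Lemma s_lt2 alpha s : unif_discrete (inX alpha) s -> s < 2.
Proof.
  intros Hu. destruct (Rlt_dec s 2) as [|Hn]; [assumption|]. exfalso.
  assert (E : Xpt alpha 2 = Xpt alpha 1).
  { apply (mid_close _ s _ _ Hu); [exists 2%nat; split; auto | exists 1%nat; split; auto |].
    rewrite dist_Xpt.
    replace (INR 2) with 2 by (simpl; ring). replace (INR 1) with 1 by reflexivity.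
    rewrite sqrt_1.
    assert (H2 : sqrt 2 <= 2).
    { rewrite <- (sqrt_pow2 2) at 2 by lra. apply sqrt_le_1_alt. lra. }
    assert (H0 : 0 <= sqrt 2) by apply sqrt_pos.
    pose proof (COS_bound (2 * PI * (2 - 1) * alpha)) as Hc.
    assert (Hle : 2 + 1 - 2 * sqrt 2 * 1 * cos (2 * PI * (2 - 1) * alpha) <= 3 ^ 2) by nra.
    apply Rle_lt_trans with 3; [|lra].
    rewrite <- (sqrt_pow2 3) by lra. apply sqrt_le_1_alt. exact Hle. }
  apply Xpt_inj in E. discriminate.
Qed.

Lemma partd alpha s : unif_discrete (inX alpha) s -> bad_approx_const alpha (s ^ 2 / 53).
Proof.
  intros Hu. pose proof (s_lt2 alpha s Hu) as Hs2. pose proof Hu as [Hs _].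
  split; [apply Rdiv_lt_0_compat; nra|].
  intros p q Hq. apply Rnot_lt_ge. intros Hsmall.
  set (Q := INR q) in *. assert (HQ : 1 <= Q) by (apply (le_INR 1); exact Hq).
  set (th := Q * alpha - IZR p) in *.
  set (de := Rabs th) in *. assert (Hde : 0 <= de) by apply Rabs_pos.
  set (T := Q ^ 2 / (2 * s ^ 2)).
  assert (HT : 0 < T) by (unfold T; apply Rdiv_lt_0_compat; nra).
  pose proof (archimed T) as [U1 U2].
  assert (Hup : (1 <= up T)%Z).
  { assert (Hp : (0 < up T)%Z) by (apply lt_IZR; lra). lia. }
  set (m := Z.to_nat (up T)).
  assert (HM : INR m = IZR (up T)) by (unfold m; apply INR_toZ; lia).
  assert (Hm1 : (1 <= m)%nat) by (unfold m; lia).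
  set (n := (m + q)%nat).
  assert (Hnm : Xpt alpha n = Xpt alpha m).
  { apply (mid_close _ s _ _ Hu); [exists n; split; [unfold n; lia|auto] | exists m; split; auto |].
    rewrite dist_Xpt.
    assert (HnQ : INR n - INR m = Q) by (unfold n, Q; rewrite plus_INR; ring).
    rewrite HnQ.
    replace (2 * PI * Q * alpha) with (2 * PI * th + 2 * PI * IZR p) by (unfold th; ring).
    rewrite cos_int_shift.
    set (c := cos (2 * PI * th)).
    set (x := sqrt (INR m)). set (y := sqrt (INR n)).
    assert (Hx2 : x ^ 2 = INR m) by (apply pow2_sqrt, pos_INR).
    assert (Hy2 : y ^ 2 = INR n) by (apply pow2_sqrt, pos_INR).
    assert (Hx0 : 0 <= x) by apply sqrt_pos. assert (Hy0 : 0 <= y) by apply sqrt_pos.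
    assert (Hyx : y ^ 2 = x ^ 2 + Q) by (rewrite Hx2, Hy2, <- HnQ; ring).
    assert (Hxy : x <= y) by nra.
    assert (HMT : T < x ^ 2 <= T + 1) by (rewrite Hx2, HM; lra).
    rewrite <- Hx2, <- Hy2.
    replace (y ^ 2 + x ^ 2 - 2 * y * x * c) with ((y - x) ^ 2 + 2 * x * y * (1 - c)) by ring.
    assert (Hfirst : (y - x) ^ 2 <= s ^ 2 / 2).
    { assert (HQe : (y - x) * (y + x) = Q) by nra.
      assert (HS : 2 * Q ^ 2 <= (y + x) ^ 2 * s ^ 2).
      { assert (HTQ : T * (2 * s ^ 2) = Q ^ 2) by (unfold T; field; lra).
        assert (H4 : 4 * T <= (y + x) ^ 2) by nra.
        apply (Rmult_le_compat_r (s ^ 2)) in H4; [|nra]. nra. }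
      assert (E2 : (y - x) ^ 2 * (y + x) ^ 2 = Q ^ 2) by (rewrite <- HQe; ring).
      assert (0 < Q ^ 2) by nra.
      assert ((y - x) ^ 2 * (2 * Q ^ 2) <= (y - x) ^ 2 * ((y + x) ^ 2 * s ^ 2))
        by (apply Rmult_le_compat_l; [apply pow2_ge_0 | exact HS]).
      assert ((y - x) ^ 2 * (2 * Q ^ 2) <= Q ^ 2 * s ^ 2) by nra.
      nra. }
    assert (Hc : 1 - c <= 32 * de ^ 2).
    { pose proof (one_minus_cos_le (2 * PI * th)) as H1. unfold c.
      assert (th ^ 2 = de ^ 2) by (unfold de; rewrite pow2_abs; reflexivity).
      pose proof PI_4. pose proof PI_RGT_0.
      assert ((2 * PI * th) ^ 2 / 2 = 2 * PI ^ 2 * th ^ 2) by field.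
      assert (PI ^ 2 <= 16) by nra. pose proof (pow2_ge_0 th). nra. }
    assert (Hc0 : 0 <= 1 - c) by (pose proof (COS_bound (2 * PI * th)); unfold c; lra).
    assert (Hxy2 : 2 * x * y <= 2 * (T + 1 + Q)) by nra.
    set (eps := Q * de) in *.
    assert (He0 : 0 <= eps) by (unfold eps; nra).
    assert (Heps : eps < s ^ 2 / 53) by exact Hsmall.
    assert (Hsec : 2 * x * y * (1 - c) <= 64 * (T * de ^ 2 + de ^ 2 + Q * de ^ 2)).
    { assert (0 <= 2 * x * y) by nra.
      assert (2 * x * y * (1 - c) <= 2 * (T + 1 + Q) * (32 * de ^ 2)).
      { apply Rmult_le_compat; nra. }
      nra. }
    assert (HT2 : T * de ^ 2 = eps ^ 2 / (2 * s ^ 2)) by (unfold T, eps; field; lra).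
    assert (Hde2 : 0 <= de ^ 2) by apply pow2_ge_0.
    assert (Hd2 : Q * de ^ 2 <= eps ^ 2).
    { replace (eps ^ 2) with ((Q * Q) * de ^ 2) by (unfold eps; ring).
      apply Rmult_le_compat_r; nra. }
    assert (Hd1 : de ^ 2 <= eps ^ 2).
    { replace (eps ^ 2) with ((Q * Q) * de ^ 2) by (unfold eps; ring).
      rewrite <- (Rmult_1_l (de ^ 2)) at 1. apply Rmult_le_compat_r; nra. }
    assert (He2 : eps ^ 2 < (s ^ 2 / 53) ^ 2) by nra.
    assert (He3 : eps ^ 2 / (2 * s ^ 2) <= s ^ 2 / 5618).
    { apply (Rmult_le_reg_r (2 * s ^ 2)); [nra|]. unfold Rdiv.
      rewrite Rmult_assoc, Rinv_l by nra. nra. }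
    assert (Hs4 : (s ^ 2 / 53) ^ 2 <= 4 * s ^ 2 / 2809).
    { replace ((s ^ 2 / 53) ^ 2) with (s ^ 2 * s ^ 2 / 2809) by field.
      assert (s ^ 2 <= 4) by nra. assert (0 <= s ^ 2) by nra.
      apply Rmult_le_compat_r; [lra|]. nra. }
    rewrite HT2 in Hsec.
    assert (Hs0 : 0 < s ^ 2) by nra.
    assert (Htot : (y - x) ^ 2 + 2 * x * y * (1 - c) < (2 * s) ^ 2).
    { replace ((2 * s) ^ 2) with (4 * s ^ 2) by ring. clear -Hfirst Hsec Hd1 Hd2 He2 He3 Hs4 Hs0. set (A := eps ^ 2 / (2 * s ^ 2)) in *. set (B2 := (s ^ 2 / 53) ^ 2) in *. set (D := (y - x) ^ 2) in *. set (S := 2 * x * y * (1 - c)) in *. set (s2 := s ^ 2) in *. set (e2 := eps ^ 2) in *. set (d2 := de ^ 2) in *. set (qd := Q * d2) in *. lra. }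
    rewrite <- (sqrt_pow2 (2 * s)) by lra. apply sqrt_lt_1_alt. split; [| exact Htot]. assert (0 <= 2 * x * y) by nra. pose proof (pow2_ge_0 (y - x)). assert (0 <= 2 * x * y * (1 - c)) by (apply Rmult_le_pos; lra). lra. }
  apply Xpt_inj in Hnm. unfold n in Hnm. lia.
Qed.

Lemma find_k alpha (Ha : 0 <= alpha < 1) (Hnz : forall i, xx alpha i <> 0) L : 1 <= L ->
  exists k, IZR (QQ alpha (S k)) <= L < IZR (QQ alpha (S (S k))).
Proof.
  intros HL.
  assert (Hind : forall j, L < IZR (QQ alpha (S (S j))) ->
            exists k, IZR (QQ alpha (S k)) <= L < IZR (QQ alpha (S (S k)))).
  { induction j as [|j IH]; intros Hj.
    - exists 0%nat. rewrite QQ_1. simpl. lra.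
    - destruct (Rlt_dec L (IZR (QQ alpha (S (S j))))) as [H|H].
      + apply IH, H.
      + exists (S j). lra. }
  apply (Hind (Z.to_nat (up L))).
  pose proof (archimed L) as [U1 _].
  assert (Hu : (0 <= up L)%Z) by (apply le_IZR; lra).
  pose proof (QQ_grow alpha Ha (Z.to_nat (up L)) Hnz) as Hg.
  rewrite Z2Nat.id in Hg by exact Hu.
  apply IZR_le in Hg. rewrite plus_IZR in Hg. simpl in Hg. lra.
Qed.

Lemma polar c1 c2 : 0 < sqrt (c1 ^ 2 + c2 ^ 2) ->
  exists phi, c1 = sqrt (c1 ^ 2 + c2 ^ 2) * cos phi /\ c2 = sqrt (c1 ^ 2 + c2 ^ 2) * sin phi.
Proof.
  intros Hr. set (r := sqrt (c1 ^ 2 + c2 ^ 2)) in *.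
  assert (Hr2 : r ^ 2 = c1 ^ 2 + c2 ^ 2) by (apply pow2_sqrt; nra).
  set (u := c1 / r).
  assert (Hu : u ^ 2 <= 1).
  { unfold u. replace ((c1 / r) ^ 2) with (c1 ^ 2 / r ^ 2) by (field; lra).
    apply (Rmult_le_reg_r (r ^ 2)); [nra|]. unfold Rdiv. rewrite Rmult_assoc, Rinv_l by nra. nra. }
  assert (Hu1 : -1 <= u <= 1) by nra.
  assert (Hs : sqrt (1 - u²) = Rabs (c2 / r)).
  { rewrite <- sqrt_Rsqr_abs. f_equal. unfold Rsqr, u. field_simplify; [|lra|lra].
    replace (r ^ 2) with (c1 ^ 2 + c2 ^ 2) by (rewrite Hr2; reflexivity). field. nra. }
  destruct (Rle_dec 0 c2) as [H|H].
  - exists (acos u). rewrite cos_acos by exact Hu1. rewrite sin_acos by exact Hu1. rewrite Hs.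
    rewrite Rabs_right by (apply Rle_ge; apply Rmult_le_pos; [lra| apply Rlt_le, Rinv_0_lt_compat; lra]).
    unfold u. split; field; lra.
  - exists (- acos u). rewrite cos_neg, sin_neg. rewrite cos_acos by exact Hu1. rewrite sin_acos by exact Hu1. rewrite Hs.
    rewrite Rabs_left.
    2:{ apply Rdiv_neg_pos; lra. }
    unfold u. split; field; lra.
Qed.

Lemma grid alpha (Ha : 0 <= alpha < 1) (Hnz : forall i, xx alpha i <> 0) (B : Z)
  (HB1 : (1 <= B)%Z) (HB : forall k, (aa alpha k <= B)%Z) L (HL : 1 <= L) (N : nat) (ga : R) :
  exists m : nat, INR m + 1 <= L /\ exists (t : Z) (e : R),
    (INR N + INR m) * alpha - ga = IZR t + e /\ Rabs e * L < IZR B + 1.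
Proof.
  destruct (find_k alpha Ha Hnz L HL) as [k [HkL HLk]].
  pose proof (QQ_mono alpha Ha k (fun i _ => Hnz i)) as [HQ1 HQm].
  set (Qk := QQ alpha (S k)) in *. set (Pk := PP alpha (S k)).
  set (Qk' := QQ alpha k) in *. set (Pk' := PP alpha k).
  assert (HQS : QQ alpha (S (S k)) = (aa alpha k * Qk + Qk')%Z) by apply QQ_SS.
  pose proof (HB k) as HBk. pose proof (aa_ge1 alpha Ha k (Hnz k)) as Ha1.
  assert (HQSb : (QQ alpha (S (S k)) <= (B + 1) * Qk)%Z) by (rewrite HQS; nia).
  apply IZR_le in HQSb. rewrite mult_IZR, plus_IZR in HQSb.
  set (th := EE alpha (S k)).
  destruct (EE_Bt alpha k (fun i _ => Hnz i)) as [_ HE]. fold th in HE.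
  pose proof (W_eq alpha (S k) (fun i _ => Hnz i)) as HW.
  pose proof (Bt_ge0 alpha Ha (S k)). pose proof (Bt_ge0 alpha Ha (S (S k))).
  pose proof (QQ_ge0 alpha Ha (S k)) as [_ HQS0]. apply IZR_le in HQS0.
  assert (Hth : Rabs th * IZR (QQ alpha (S (S k))) <= 1).
  { rewrite HE, Rabs_mult, pow_1_abs, Rmult_1_l, Rabs_right by lra.
    assert (0 <= IZR Qk * Bt alpha (S (S k))) by (apply Rmult_le_pos; [apply IZR_le; lia | lra]).
    fold Qk in HW. lra. }
  assert (HQk : 1 <= IZR Qk) by (apply IZR_le; lia).
  set (ga' := ga - INR N * alpha).
  set (j0 := Int_part (IZR Qk * ga' + / 2)).
  pose proof (base_Int_part (IZR Qk * ga' + / 2)) as [J1 J2]. fold j0 in J1, J2.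
  set (D := (Qk' * Pk - Pk' * Qk)%Z).
  assert (HD : (D * D = 1)%Z) by apply DD_eq.
  set (a0 := (D * j0 * Qk')%Z).
  set (mZ := (a0 mod Qk)%Z). set (u := (a0 / Qk)%Z).
  assert (Hdm : a0 = (Qk * u + mZ)%Z) by (apply Z.div_mod; lia).
  assert (Hmb : (0 <= mZ < Qk)%Z) by (apply Z.mod_pos_bound; lia).
  set (t := (j0 * D * Pk' - u * Pk)%Z).
  assert (Hmt : (mZ * Pk = j0 + t * Qk)%Z).
  { assert (Hm : mZ = (D * j0 * Qk' - Qk * u)%Z) by (unfold a0 in Hdm; lia).
    rewrite Hm. unfold t.
    assert (E : ((D * j0 * Qk' - Qk * u) * Pk - (j0 + (j0 * D * Pk' - u * Pk) * Qk)
               = j0 * (D * (Qk' * Pk - Pk' * Qk) - 1))%Z) by ring.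
    fold D in E. rewrite HD in E. lia. }
  exists (Z.to_nat mZ).
  assert (HmR : INR (Z.to_nat mZ) = IZR mZ) by (apply INR_toZ; lia).
  rewrite HmR.
  assert (HmQ : 0 <= IZR mZ /\ IZR mZ + 1 <= IZR Qk).
  { split; [apply IZR_le; lia|]. rewrite <- plus_IZR. apply IZR_le. lia. }
  split; [lra|].
  exists t, ((IZR j0 / IZR Qk - ga') + IZR mZ * th / IZR Qk).
  split.
  - assert (Hal : IZR Qk * alpha = IZR Pk + th).
    { unfold th, EE. fold Qk Pk. ring. }
    assert (HmtR : IZR mZ * IZR Pk = IZR j0 + IZR t * IZR Qk).
    { rewrite <- !mult_IZR, <- plus_IZR. f_equal. exact Hmt. }
    assert (Hma : IZR mZ * alpha = IZR j0 / IZR Qk + IZR t + IZR mZ * th / IZR Qk).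
    { apply (Rmult_eq_reg_r (IZR Qk)); [|lra].
      replace (IZR mZ * alpha * IZR Qk) with (IZR mZ * (IZR Qk * alpha)) by ring.
      rewrite Hal. replace (IZR mZ * (IZR Pk + th)) with (IZR mZ * IZR Pk + IZR mZ * th) by ring.
      rewrite HmtR. field. lra. }
    unfold ga'. rewrite Rmult_plus_distr_r, Hma. ring.
  -
    assert (Hb1 : Rabs (IZR j0 / IZR Qk - ga') <= / 2 / IZR Qk).
    { replace (IZR j0 / IZR Qk - ga') with ((IZR j0 - IZR Qk * ga') / IZR Qk) by (field; lra).
      unfold Rdiv. rewrite Rabs_mult, (Rabs_right (/ IZR Qk)) by (apply Rle_ge, Rlt_le, Rinv_0_lt_compat; lra).
      apply Rmult_le_compat_r; [apply Rlt_le, Rinv_0_lt_compat; lra|].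
      apply Rabs_le. lra. }
    assert (Hb2 : Rabs (IZR mZ * th / IZR Qk) <= Rabs th).
    { unfold Rdiv. rewrite !Rabs_mult, (Rabs_right (IZR mZ)) by lra.
      rewrite (Rabs_right (/ IZR Qk)) by (apply Rle_ge, Rlt_le, Rinv_0_lt_compat; lra).
      pose proof (Rabs_pos th).
      replace (IZR mZ * Rabs th * / IZR Qk) with (Rabs th * (IZR mZ / IZR Qk)) by (field; lra).
      rewrite <- (Rmult_1_r (Rabs th)) at 2. apply Rmult_le_compat_l; [lra|].
      apply (Rmult_le_reg_r (IZR Qk)); [lra|]. unfold Rdiv. rewrite Rmult_assoc, Rinv_l by lra. lra. }
    pose proof (Rabs_triang (IZR j0 / IZR Qk - ga') (IZR mZ * th / IZR Qk)) as Htr.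
    set (e := (IZR j0 / IZR Qk - ga') + IZR mZ * th / IZR Qk) in *.
    assert (HL0 : 0 < L) by lra.
    assert (Hp1 : / 2 / IZR Qk * L < (IZR B + 1) / 2).
    { apply (Rmult_lt_reg_r (IZR Qk)); [lra|].
      replace (/ 2 / IZR Qk * L * IZR Qk) with (L / 2) by (field; lra). nra. }
    assert (Hp2 : Rabs th * L <= 1).
    { pose proof (Rabs_pos th). nra. }
    assert (HB1R : 1 <= IZR B) by (apply IZR_le; lia).
    assert (Rabs e * L <= (/ 2 / IZR Qk + Rabs th) * L) by (apply Rmult_le_compat_r; lra).
    nra.
Qed.

Lemma parta alpha (Ha : 0 <= alpha < 1) (B : Z) (HB0 : (0 < B)%Z) :
  bad_approx alpha -> pq_bounded alpha B -> rel_dense (inX alpha) (6 * sqrt (IZR B)).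
Proof.
  intros Hbad Hpq.
  pose proof (bad_nz alpha Ha Hbad) as Hnz.
  assert (HB : forall k, (aa alpha k <= B)%Z) by (intros k; apply Hpq, Hnz).
  assert (HB1 : (1 <= B)%Z) by lia.
  assert (HBR : 1 <= IZR B) by (apply IZR_le; lia).
  set (sB := sqrt (IZR B)).
  assert (HsB2 : sB ^ 2 = IZR B) by (apply pow2_sqrt; lra).
  assert (HsB0 : 0 <= sB) by apply sqrt_pos.
  assert (HsB1 : 1 <= sB) by nra.
  split; [lra|].
  intros [c1 c2].
  set (b := IZR B + 1).
  set (h := 2 * sqrt b).
  assert (Hsb2 : sqrt b ^ 2 = b) by (apply pow2_sqrt; unfold b; lra).
  assert (Hsb0 : 0 <= sqrt b) by apply sqrt_pos.
  assert (Hh2 : h ^ 2 = 4 * b) by (unfold h; nra).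
  assert (Hh0 : 0 <= h) by (unfold h; lra).
  assert (Hsb : sqrt b <= 3 / 2 * sB).
  { assert (sqrt b ^ 2 <= (3 / 2 * sB) ^ 2) by (unfold b in *; nra). nra. }
  set (rho := sqrt (c1 ^ 2 + c2 ^ 2)).
  assert (Hrho0 : 0 <= rho) by apply sqrt_pos.
  destruct (Rlt_dec rho h) as [Hnear|Hfar].
  - exists (Xpt alpha 1). split; [|exists 1%nat; split; auto].
    unfold in_ball.
    pose proof (dist2_triangle (0, 0) (c1, c2) (Xpt alpha 1)) as Ht.
    assert (E1 : dist2 (0, 0) (c1, c2) = rho) by (unfold dist2, rho; simpl; f_equal; ring).
    assert (E2 : dist2 (0, 0) (Xpt alpha 1) = 1).
    { unfold dist2. cbn [fst snd].
      replace ((0 - fst (Xpt alpha 1)) ^ 2 + (0 - snd (Xpt alpha 1)) ^ 2)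
        with (fst (Xpt alpha 1) ^ 2 + snd (Xpt alpha 1) ^ 2) by ring.
      rewrite Xpt_norm. simpl. apply sqrt_1. }
    rewrite E1, E2 in Ht. unfold h in Hnear. lra.
  - apply Rnot_lt_le in Hfar.
    assert (Hb2 : 2 <= b) by (unfold b; lra).
    assert (Hrpos : 0 < rho) by nra.
    destruct (polar c1 c2 Hrpos) as [phi [Ec1 Ec2]]. fold rho in Ec1, Ec2.
    set (L := 4 * rho * h - 1).
    assert (Hrh : 4 * b <= rho * h) by nra.
    assert (HL : 2 * rho * h <= L) by (unfold L; nra).
    assert (HL1 : 1 <= L) by nra.
    set (N := Z.to_nat (up ((rho - h) ^ 2))).
    pose proof (archimed ((rho - h) ^ 2)) as [U1 U2].
    assert (Hup : (1 <= up ((rho - h) ^ 2))%Z).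
    { assert (Hp : (0 < up ((rho - h) ^ 2))%Z) by (apply lt_IZR; pose proof (pow2_ge_0 (rho - h)); lra). lia. }
    assert (HN : INR N = IZR (up ((rho - h) ^ 2))) by (unfold N; apply INR_toZ; lia).
    destruct (grid alpha Ha Hnz B HB1 HB L HL1 N (phi / (2 * PI))) as [m [Hm [t [e [Heq He]]]]].
    exists (Xpt alpha (N + m)). split; [|exists (N + m)%nat; split; [unfold N; lia|reflexivity]].
    unfold in_ball. rewrite Ec1, Ec2. unfold Xpt. rewrite dist_polar.
    assert (Hc : cos (phi - 2 * PI * INR (N + m) * alpha) = cos (2 * PI * e)).
    { rewrite <- cos_neg. rewrite <- (cos_int_shift (2 * PI * e) t). f_equal.
      rewrite plus_INR. pose proof PI_RGT_0.
      replace (- (phi - 2 * PI * (INR N + INR m) * alpha)) with (2 * PI * ((INR N + INR m) * alpha - phi / (2 * PI))) by (field; lra).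
      rewrite Heq. ring. }
    rewrite Hc.
    set (s := sqrt (INR (N + m))).
    assert (Hs2 : s ^ 2 = INR (N + m)) by (apply pow2_sqrt, pos_INR).
    assert (Hs0 : 0 <= s) by apply sqrt_pos.
    rewrite plus_INR in Hs2.
    assert (Hm0 : 0 <= INR m) by apply pos_INR.
    assert (Hlo : (rho - h) ^ 2 <= s ^ 2) by lra.
    assert (Hhi : s ^ 2 <= (rho + h) ^ 2) by (unfold L in Hm; nra).
    assert (Hsl : rho - h <= s) by nra.
    assert (Hsh : s <= rho + h) by nra.
    assert (Hfirst : (s - rho) ^ 2 <= 4 * b) by nra.
    pose proof (one_minus_cos_le (2 * PI * e)) as Hcos.
    pose proof PI_4. pose proof PI_RGT_0.
    assert (Hcos2 : 1 - cos (2 * PI * e) <= 32 * e ^ 2).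
    { assert ((2 * PI * e) ^ 2 / 2 = 2 * PI ^ 2 * e ^ 2) by field.
      assert (PI ^ 2 <= 16) by nra. pose proof (pow2_ge_0 e). nra. }
    assert (Hc0 : 0 <= 1 - cos (2 * PI * e)) by (pose proof (COS_bound (2 * PI * e)); lra).
    assert (Hsec : 2 * rho * s * (1 - cos (2 * PI * e)) <= 128 * (rho ^ 2 * e ^ 2)).
    { assert (2 * rho * s <= 4 * rho ^ 2) by nra.
      assert (0 <= 2 * rho * s) by nra.
      assert (2 * rho * s * (1 - cos (2 * PI * e)) <= 4 * rho ^ 2 * (32 * e ^ 2))
        by (apply Rmult_le_compat; nra).
      nra. }
    assert (He2 : (Rabs e * L) ^ 2 < b ^ 2).
    { pose proof (Rabs_pos e). assert (0 <= Rabs e * L) by nra. unfold b. nra. }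
    rewrite Rpow_mult_distr, pow2_abs in He2.
    assert (HL2 : (2 * rho * h) ^ 2 <= L ^ 2) by (apply pow_incr; nra).
    assert (Hre : rho ^ 2 * e ^ 2 * (16 * b) < b ^ 2).
    { assert (e ^ 2 * (2 * rho * h) ^ 2 <= e ^ 2 * L ^ 2) by (apply Rmult_le_compat_l; [apply pow2_ge_0 | exact HL2]).
      replace ((2 * rho * h) ^ 2) with (4 * rho ^ 2 * h ^ 2) in H1 by ring. rewrite Hh2 in H1. nra. }
    assert (Hre2 : rho ^ 2 * e ^ 2 < b / 16).
    { apply (Rmult_lt_reg_r (16 * b)); [lra|]. replace (b / 16 * (16 * b)) with (b ^ 2) by field. exact Hre. }
    assert (Htot : rho ^ 2 + s ^ 2 - 2 * rho * s * cos (2 * PI * e) < (6 * sB) ^ 2).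
    { replace (rho ^ 2 + s ^ 2 - 2 * rho * s * cos (2 * PI * e))
        with ((s - rho) ^ 2 + 2 * rho * s * (1 - cos (2 * PI * e))) by ring.
      replace ((6 * sB) ^ 2) with (36 * sB ^ 2) by ring. rewrite HsB2. unfold b in *. lra. }
    rewrite <- (sqrt_pow2 (6 * sB)) by lra. apply sqrt_lt_1_alt. split; [|exact Htot].
    replace (rho ^ 2 + s ^ 2 - 2 * rho * s * cos (2 * PI * e))
        with ((s - rho) ^ 2 + 2 * rho * s * (1 - cos (2 * PI * e))) by ring.
    assert (0 <= 2 * rho * s) by nra. pose proof (pow2_ge_0 (s - rho)).
    assert (0 <= 2 * rho * s * (1 - cos (2 * PI * e))) by (apply Rmult_le_pos; lra). lra.
Qed.

Theorem theorem3 (alpha : R) (Halpha : 0 <= alpha < 1) :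
  (* (a) *)
  (forall B : Z, (0 < B)%Z -> bad_approx alpha -> pq_bounded alpha B ->
     rel_dense (inX alpha) (6 * sqrt (IZR B))) /\
  (* (b) *)
  (forall r : R, rel_dense (inX alpha) r ->
     bad_approx alpha /\ pq_bounded alpha (Int_part (96 * r ^ 2))) /\
  (* (c) *)
  (forall C : R, bad_approx_const alpha C ->
     unif_discrete (inX alpha) (sqrt C / 2)) /\
  (* (d) *)
  (forall s : R, unif_discrete (inX alpha) s ->
     bad_approx_const alpha (s ^ 2 / 53)).
Proof.
  split; [|split; [|split]].
  - intros B HB. apply parta; assumption.
  - intros r. apply partb; assumption.
  - intros C. apply partc; assumption.
  - intros s. apply partd.
Qed.
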